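(* Let $w$ be a word and $TG(w) = (V, E_1, \dots, E_T)$ the temporal graph it represents, and suppose $TG(w)$ is connected in every timestep. Then for every edge $(v_x, v_y)$ of $G(w)$ and every $t \in [1, T - \min(d(v_x), d(v_y))]$, we have $(v_x, v_y) \in E_t \cup E_{t+1} \cup \dots \cup E_{t + \min(d(v_x), d(v_y))}$.
   Context: Words are over $\Sigma=\{1,\dots,n\}$; $w[i]$ is the $i$-th letter, $w[i,j]$ the factor $w[i]\cdots w[j]$, $\mathrm{letters}(u)$ the set of symbols occurring in $u$, $\pi_{\mathcal S}(w)$ the subsequence of $w$ of all occurrences of symbols in $\mathcal S$. Symbols $x,y$ alternate in $w$ if $\pi_{\{x,y\}}(w) \in \{(xy)^k, (xy)^kx, (yx)^k, (yx)^ky : k \ge 0\}$. $G(w)$ has vertex set $V=\{v_1,\dots,v_n\}$ and undirected edge $(v_x,v_y)$ iff $x\neq y$ alternate in $w$; $d(v)$ is the degree of $v$ in $G(w)$. Start points: $S_1=1$, and $S_i$ is the least index $j>S_{i-1}$ with $w[j] \in \mathrm{letters}(w[S_{i-1},j-1])$; $S_1<\dots<S_T$ are all start points. The $t$-th timestep factor is $w[S_t,S_{t+1}-1]$ ($t<T$) or $w[S_T,|w|]$ ($t=T$). $TG(w)=(V,E_1,\dots,E_T)$ with $E_t$ the set of edges $(v_x,v_y)$ of $G(w)$ with $x$ or $y$ occurring in the $t$-th timestep factor. Connected in every timestep means $(V,E_t)$ is connected for all $t$. *)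

(* Defs.v *)
(* Symbols 1..n of the paper are represented by 'I_n
   (symbol i+1 <-> ordinal i); positions are 0-indexed internally,
   timesteps are 1-indexed as in the paper. *)
From mathcomp Require Import all_boot.
Set Implicit Arguments. Unset Strict Implicit. Unset Printing Implicit Defensive.

Section Words.
Variable n : nat.
Notation word := (seq 'I_n).

Definition proj2 (x y : 'I_n) (w : word) : word :=
  [seq a <- w | (a == x) || (a == y)].

(* x and y alternate: pi_{x,y}(w) is (xy)^k, (xy)^k x, (yx)^k or (yx)^k y
   for some k >= 0 (k is necessarily <= |w|). *)
Definition alternate (w : word) (x y : 'I_n) : bool :=
  let p := proj2 x y w in
  [exists k : 'I_(size w).+1,
     [|| p == flatten (nseq k [:: x; y]),
         p == flatten (nseq k [:: x; y]) ++ [:: x],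
         p == flatten (nseq k [:: y; x])
       | p == flatten (nseq k [:: y; x]) ++ [:: y]]].

Definition edgeG (w : word) : rel 'I_n :=
  fun x y => (x != y) && alternate w x y.

Definition deg (w : word) (x : 'I_n) : nat := #|[set y | edgeG w x y]|.

Definition repeats (w : word) (s j : nat) : bool :=
  has (fun a => onth w j == Some a) (take (j - s) (drop s w)).

Definition next_start (w : word) (s : nat) : option nat :=
  if [seq j <- iota s.+1 (size w - s.+1) | repeats w s j] is j :: _
  then Some j else None.

Fixpoint starts_from (fuel : nat) (w : word) (s : nat) : seq nat :=
  if fuel is f.+1 then
    s :: (if next_start w s is Some j then starts_from f w j else [::])
  else [::].

(* the list S_1 < ... < S_T (0-indexed positions; S_1 = 0);
   size w + 1 steps of fuel suffice since start points strictly increase *)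
Definition starts (w : word) : seq nat := starts_from (size w).+1 w 0.

Definition nsteps (w : word) : nat := size (starts w).

Definition S (w : word) (t : nat) : nat := nth 0 (starts w) t.-1.

Definition factor (w : word) (t : nat) : word :=
  if t < nsteps w then take (S w t.+1 - S w t) (drop (S w t) w)
  else drop (S w t) w.

Definition Et (w : word) (t : nat) : rel 'I_n :=
  fun x y => edgeG w x y && ((x \in factor w t) || (y \in factor w t)).

Definition connected_step (w : word) (t : nat) : Prop :=
  forall u v : 'I_n, connect (Et w t) u v.

Definition connected_every_timestep (w : word) : Prop :=
  forall t, 1 <= t <= nsteps w -> connected_step w t.

End Words.

(* Main.v *)
Require Import Defs.
From mathcomp Require Import all_boot.
From mathcomp Require Import zify.
From Stdlib Require Import Lia.

Definition neqr {T : eqType} : rel T := fun a b => a != b.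

Lemma alt_path n (x z : 'I_n) k : x != z ->
  path neqr z (flatten (nseq k [:: x; z])) &&
  path neqr z (flatten (nseq k [:: x; z]) ++ [:: x]).
Proof.
move=> xz; elim: k => [|k IH] /=.
  by rewrite /neqr (eq_sym z x) xz.
move/andP: IH => [h1 h2].
by rewrite h1 h2 /neqr (eq_sym z x) xz.
Qed.

Lemma alt_sorted n (w : seq 'I_n) u z : u != z -> alternate w u z ->
  sorted neqr (proj2 u z w).
Proof.
move=> uz /existsP [k /or4P [] /eqP ->]; case: (nat_of_ord k) => [|k'] //=.
- by have /andP [-> _] := @alt_path _ u z k' uz; rewrite /neqr uz.
- by have /andP [_ ->] := @alt_path _ u z k' uz; rewrite /neqr uz.
- have zu : z != u by rewrite eq_sym.
  by have /andP [-> _] := @alt_path _ z u k' zu; rewrite /neqr zu.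
- have zu : z != u by rewrite eq_sym.
  by have /andP [_ ->] := @alt_path _ z u k' zu; rewrite /neqr zu.
Qed.

Lemma next_start_spec n (w : seq 'I_n) s j :
  next_start w s = Some j -> s < j < size w.
Proof.
rewrite /next_start.
case E: [seq j <- iota s.+1 (size w - s.+1) | repeats w s j] => [|j' r] //= [<-].
have : j' \in [seq j <- iota s.+1 (size w - s.+1) | repeats w s j].
  by rewrite E mem_head.
rewrite mem_filter mem_iota => /andP [_ /andP [h1 h2]].
apply/andP; split; lia.
Qed.

Lemma sf_le n (w : seq 'I_n) f s : s <= size w ->
  all (fun j => j <= size w) (starts_from f w s).
Proof.
elim: f s => [|f IH] s hs //=.
rewrite hs /=; case E: next_start => [j|] //.
apply: IH; have := @next_start_spec _ _ _ _ E; lia.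
Qed.

Lemma sf_inc n (w : seq 'I_n) f s i :
  i.+1 < size (starts_from f w s) ->
  nth 0 (starts_from f w s) i < nth 0 (starts_from f w s) i.+1.
Proof.
elim: f s i => [|f IH] s i //=.
case E: next_start => [j|] //=.
case: i => [|i] /=.
  case: f {IH} => [|f] //= _; have := @next_start_spec _ _ _ _ E; lia.
move=> h; apply: IH; lia.
Qed.

Section Aux.
Variable n : nat.
Variable w : seq 'I_n.

Definition Ee (t : nat) : nat := if t < nsteps w then S w t.+1 else size w.

Lemma S_inc t : 1 <= t -> t < nsteps w -> S w t < S w t.+1.
Proof.
move=> h1 h2; rewrite /S; case: t h1 h2 => [|t] //= _ h2.
apply: (@sf_inc _ w); rewrite /nsteps /starts in h2; exact h2.
Qed.

Lemma S_le t : 1 <= t <= nsteps w -> S w t <= size w.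
Proof.
move=> /andP [h1 h2].
have := @sf_le _ w (size w).+1 0 (leq0n (size w)) => /allP; apply.
rewrite /S; apply: mem_nth; rewrite /nsteps /starts in h2 *; case: t h1 h2 => [|t] //=.
Qed.

Lemma S_mono a b : 1 <= a -> a <= b -> b <= nsteps w -> S w a <= S w b.
Proof.
move=> ha; elim: b => [|b IH] hab hb; first lia.
case: (ltngtP a b.+1) => h; [|lia|by rewrite h].
apply: (leq_trans (IH _ _)); [lia|lia|]; apply: ltnW; apply: S_inc; lia.
Qed.

Lemma S_E t : 1 <= t <= nsteps w -> S w t <= Ee t.
Proof.
move=> h; rewrite /Ee; case: ifP => h2; last exact: S_le.
apply: ltnW; apply: S_inc; lia.
Qed.

Lemma factorE t : 1 <= t <= nsteps w -> factor w t = drop (S w t) (take (Ee t) w).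
Proof.
move=> h; rewrite /factor /Ee; case: ifP => h2; last by rewrite take_size.
rewrite take_drop subnK //; apply: ltnW; apply: S_inc; lia.
Qed.

Lemma seg_cat a b c (s : seq 'I_n) : a <= b -> b <= c ->
  drop a (take b s) ++ drop b (take c s) = drop a (take c s).
Proof.
move=> hab hbc.
rewrite -[in RHS](cat_take_drop b (take c s)) take_takel // drop_cat size_take_min.
case: ltnP => h; first by [].
rewrite (@drop_oversize _ a (take b s)); last by rewrite size_take_min; lia.
case: (a - minn b (size s) =P 0) => [->|hne]; first by rewrite drop0.
have -> : drop b (take c s) = [::].
  by apply: drop_oversize; rewrite size_take_min; lia.
by [].
Qed.

Lemma window t m : 1 <= t -> t + m <= nsteps w ->
  flatten [seq factor w t' | t' <- iota t m.+1] = drop (S w t) (take (Ee (t + m)) w).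
Proof.
elim: m t => [|m IH] t h1 h2.
  by rewrite /= cats0 addn0 factorE //; lia.
rewrite (_ : iota t m.+2 = t :: iota t.+1 m.+1) // map_cons (_ : forall a l, flatten (a :: l) = a ++ flatten l) // IH; [|lia|lia].
rewrite factorE; last lia.
have -> : Ee t = S w t.+1 by rewrite /Ee; case: ifP => //; lia.
rewrite addSnnS; apply: seg_cat.
  apply: ltnW; apply: S_inc; lia.
apply: leq_trans (S_E _ _); last lia.
apply: S_mono; lia.
Qed.

Lemma uniq_count (s : seq 'I_n) : (forall x, count_mem x s <= 1) -> uniq s.
Proof.
elim: s => [|y s IH] //= h.
apply/andP; split.
  apply/count_memPn; have := h y; rewrite eqxx /=; lia.
apply: IH => x; have := h x; rewrite /=; case: (y == x) => /=; lia.
Qed.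

Lemma sumn_ge (f : nat -> nat) (s : seq nat) :
  (forall x, x \in s -> 0 < f x) -> size s <= sumn [seq f x | x <- s].
Proof.
elim: s => [|a s IH] //= h.
have := h a (mem_head _ _); have := IH (fun x hx => h x (ltac:(by rewrite inE hx orbT))); lia.
Qed.

Lemma key (u : 'I_n) t :
  1 <= t -> t + deg w u <= nsteps w ->
  (forall t', t <= t' <= t + deg w u -> u \notin factor w t' ->
     exists z, edgeG w u z && (z \in factor w t')) ->
  exists2 t', t <= t' <= t + deg w u & u \in factor w t'.
Proof.
move=> h1 h2 hz.
set m := deg w u.
have [/hasP [t' ht' hu]|/hasPn hn] :=
  boolP (has (fun t' => u \in factor w t') (iota t m.+1)).
  exists t' => //; rewrite mem_iota in ht'; lia.
exfalso.
set N := [set z | edgeG w u z].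
set seg := flatten [seq factor w t' | t' <- iota t m.+1].
have segE : seg = drop (S w t) (take (Ee (t + m)) w) by apply: window.
have hu : u \notin seg.
  apply/flattenP; case=> s /mapP [t' ht' ->] hus.
  by have := hn t' ht'; rewrite hus.
have lower : m.+1 <= count (mem N) seg.
  rewrite /seg count_flatten -map_comp.
  rewrite -[X in X <= _](size_iota t m.+1); apply: sumn_ge => t' ht' /=.
  have ht2 : t <= t' <= t + m by move: (ht'); rewrite mem_iota; lia.
  have [z /andP [ez zf]] := hz t' ht2 (hn t' ht').
  rewrite -has_count; apply/hasP; exists z; first exact: zf.
  have hzN : z \in N by rewrite inE.
  exact: hzN.
clearbody seg.
have c1 : forall z, z \in N -> count_mem z seg <= 1.
  move=> z; rewrite inE => /andP [uz alt].
  have so := @alt_sorted _ w u z uz alt.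
  have wE : w = take (S w t) (take (Ee (t + m)) w) ++ seg ++ drop (Ee (t + m)) w.
    by rewrite segE catA cat_take_drop cat_take_drop.
  rewrite /proj2 wE !filter_cat in so.
  have [_ so2] := cat_sorted2 so.
  have [so3 _] := cat_sorted2 so2.
  have fE : [seq a <- seg | (a == u) || (a == z)] = [seq a <- seg | a == z].
    apply: eq_in_filter => a ha.
    have -> : (a == u) = false by apply/eqP => e; move: hu; rewrite -e ha.
    by [].
  rewrite fE in so3.
  rewrite -size_filter.
  have fa : all (pred1 z) [seq a <- seg | a == z] by apply: filter_all.
  move: so3 fa.
  case: [seq a <- seg | a == z] => [|a [|b r]] //= /andP [hab _] /and3P [/eqP ea /eqP eb _].
  by move: hab; rewrite /neqr ea eb eqxx.
have upper : count (mem N) seg <= m.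
  rewrite -size_filter /m /deg cardE.
  apply: uniq_leq_size.
    apply: uniq_count => z.
    case hzN : (z \in N).
      rewrite count_filter; apply: leq_trans (c1 z hzN).
      by apply: sub_count => a /andP [].
    have -> : count_mem z [seq x <- seg | x \in N] = 0.
      by apply/count_memPn; rewrite mem_filter hzN.
    by [].
  by move=> a; rewrite mem_filter mem_enum => /andP [].
lia.
Qed.

Lemma first_step t' (a b : 'I_n) : a != b -> connect (Et w t') a b ->
  a \notin factor w t' -> exists z, edgeG w a z && (z \in factor w t').
Proof.
move=> ab /connectP [[|z p]] /=.
  by move=> _ e; move: ab; rewrite e eqxx.
move=> /andP [/andP [ez hf] _] _ ha.
exists z; rewrite ez /=; move: hf; by rewrite (negbTE ha).
Qed.

End Aux.

Theorem corollary2 (n : nat) (w : seq 'I_n) :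
  connected_every_timestep w ->
  forall x y : 'I_n, edgeG w x y ->
  forall t : nat, 1 <= t <= nsteps w - minn (deg w x) (deg w y) ->
  exists2 t' : nat, t <= t' <= t + minn (deg w x) (deg w y) & Et w t' x y.
Proof.
move=> hc x y hxy t /andP [h1 h2].
have xy : x != y by case/andP: hxy.
case: (leqP (deg w x) (deg w y)) => hd.
  rewrite (minn_idPl hd) in h2 *.
  have [t' ht' hx] := @key _ w x t h1 (ltac:(lia)) (fun t' ht' hn =>
     @first_step _ w t' x y xy (hc t' (ltac:(lia)) x y) hn).
  by exists t' => //; rewrite /Et hxy hx.
rewrite (minn_idPr (ltnW hd)) in h2 *.
have yx : y != x by rewrite eq_sym.
have [t' ht' hy] := @key _ w y t h1 (ltac:(lia)) (fun t' ht' hn =>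
   @first_step _ w t' y x yx (hc t' (ltac:(lia)) y x) hn).
by exists t' => //; rewrite /Et hxy hy orbT.
Qed.
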